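(* Let $F\subseteq E(H)$ with $|F|=\ell$, and let $X\subseteq V$ be a cut with $S_i\subseteq X$ and $T_i\subseteq V\setminus X$ for some $i\in[q]$. If $X$ is intact with respect to $F$, then $\tilde x(\delta_G(X)\setminus F)\ge 3/4$.
   Context: Standing setup. $G=(V,E)$ is an undirected graph with $n=|V|$, demand-pairs $(S_i,T_i)$, $i\in[q]$, of subsets of $V$. $\ell\ge1$ is an integer and $E_\ell\subseteq E$ an edge set such that in $(V,E_\ell)$ every $(S_i,T_i)$ is $\ell$-edge-connected. $x:E\to[0,1]$ satisfies $x_e=1$ for $e\in E_\ell$ and $\sum_{e\in\delta_G(X)}x_e\ge \ell+1$ for every $i\in[q]$ and every $X$ with $T_i\subseteq X\subseteq V\setminus S_i$ (here $\delta_G(X)$ is the set of edges of $G$ with exactly one endpoint in $X$, and $x(F)=\sum_{e\in F}x_e$). $\beta\ge1$ is a real. $\mathsf{LARGE}=\{e: x_e\ge 1/(4\ell\beta)\}$, $\mathsf{SMALL}=E\setminus\mathsf{LARGE}$, and $H=(V,\mathsf{LARGE})$. Capacities: $\tilde x_e=1/(4\ell\beta)$ if $e\in\mathsf{LARGE}$; $\tilde x_e=0$ if $x_e<\frac{1}{2n^2}\cdot\frac1{4\ell\beta}$; $\tilde x_e=x_e$ otherwise. $\mathbb Q^F$ is the set of vertex sets of connected components of $(V,E(H)\setminus F)$. A cut $X\subseteq V$ is shattered (w.r.t. $F$) if some $Q\in\mathbb Q^F$ satisfies $Q\cap X\neq\emptyset$ and $Q\cap(V\setminus X)\neq\emptyset$;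 otherwise $X$ is intact. *)

(* Defs.v *)
From mathcomp Require Import all_boot all_order all_algebra.
Set Implicit Arguments. Unset Strict Implicit. Unset Printing Implicit Defensive.
Import Order.TTheory GRing.Theory Num.Theory.
Local Open Scope ring_scope.

(* A simple undirected graph on a finite vertex type V is given by its edge
   set E : {set {set V}}, each edge being a 2-element vertex set. *)
Definition simple_edges (V : finType) (E : {set {set V}}) : Prop :=
  forall e, e \in E -> #|e| = 2%N.

Definition delta (V : finType) (F : {set {set V}}) (X : {set V}) : {set {set V}} :=
  [set e in F | #|e :&: X| == 1%N].

Definition xsum (R : numDomainType) (V : finType) (x : {set V} -> R)
  (F : {set {set V}}) : R := \sum_(e in F) x e.

Definition l_edge_connected (V : finType) (El : {set {set V}}) (l : nat)
  (S T : {set V}) : Prop :=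
  forall X : {set V}, T \subset X -> X \subset ~: S -> (l <= #|delta El X|)%N.

Definition threshold (R : realFieldType) (l : nat) (beta : R) : R :=
  1 / (4 * l%:R * beta).

Definition LARGE (R : realFieldType) (V : finType) (E : {set {set V}})
  (x : {set V} -> R) (l : nat) (beta : R) : {set {set V}} :=
  [set e in E | threshold l beta <= x e].

Definition xtilde (R : realFieldType) (V : finType) (x : {set V} -> R)
  (l : nat) (beta : R) (e : {set V}) : R :=
  if threshold l beta <= x e then threshold l beta
  else if x e < 1 / (2 * (#|V|%:R) ^+ 2) * threshold l beta then 0
  else x e.

Definition adj (V : finType) (Ed : {set {set V}}) : rel V :=
  fun u v => [set u; v] \in Ed.

Definition components (V : finType) (EH F : {set {set V}}) : {set {set V}} :=
  [set [set v | connect (adj (EH :\: F)) u v] | u : V].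

Definition shattered (V : finType) (EH F : {set {set V}}) (X : {set V}) : bool :=
  [exists Q in components EH F, (Q :&: X != set0) && (Q :&: ~: X != set0)].

Definition intact (V : finType) (EH F : {set {set V}}) (X : {set V}) : bool :=
  ~~ shattered EH F X.

(* Main.v *)
Require Import Defs.
From mathcomp Require Import all_boot all_order all_algebra.
From mathcomp Require Import zify ring lra.
Import Order.TTheory GRing.Theory Num.Theory.
Local Open Scope ring_scope.

Lemma deltaC (V : finType) (E : {set {set V}}) (X : {set V}) :
  simple_edges E -> delta E (~: X) = delta E X.
Proof.
move=> hE; apply/setP=> e; rewrite !inE.
case eE: (e \in E) => //=.
have := cardsID X e; rewrite (hE e) // => h; rewrite -setDE.
by apply/eqP/eqP; lia.
Qed.

Lemma ncard2 (V : finType) (D : {set {set V}}) :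
  (forall e, e \in D -> #|e| = 2%N) -> (#|D| <= #|V| ^ 2)%N.
Proof.
move=> hD.
have : (#|D| <= #|[set A : {set V} | #|A| == 2%N]|)%N.
  by apply: subset_leq_card; apply/subsetP=> e /hD he; rewrite inE he.
rewrite card_draws bin2 => h; apply: leq_trans h _.
set n := #|V|; have : (n.-1 <= n)%N by apply: leq_pred.
move: n.-1 => m hm; rewrite leq_half_double -muln2; nia.
Qed.

Theorem lemma5p7 (R : realFieldType) (V : finType) (E El : {set {set V}})
  (q : nat) (S T : 'I_q -> {set V}) (l : nat) (x : {set V} -> R) (beta : R)
  (F : {set {set V}}) (X : {set V}) (i : 'I_q) :
  simple_edges E ->
  (1 <= l)%N ->
  El \subset E ->
  (forall j : 'I_q, l_edge_connected El l (S j) (T j)) ->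
  (forall e, e \in E -> 0 <= x e <= 1) ->
  (forall e, e \in El -> x e = 1) ->
  (forall (j : 'I_q) (Y : {set V}), T j \subset Y -> Y \subset ~: S j ->
      l%:R + 1 <= xsum x (delta E Y)) ->
  1 <= beta ->
  F \subset LARGE E x l beta ->
  #|F| = l ->
  S i \subset X -> T i \subset ~: X ->
  intact (LARGE E x l beta) F X ->
  3 / 4 <= xsum (xtilde x l beta) (delta E X :\: F).
Proof.
move=> hE hl _ _ hx _ hcut hb hF hFl hS hT hint.
set D := delta E X :\: F.
have hX : l%:R + 1 <= xsum x (delta E X).
  rewrite -(@deltaC _ E X hE); apply: (hcut i) => //.
  by rewrite setCS.
have hDE : forall e, e \in D -> e \in E.
  by move=> e; rewrite !inE => /and3P[_ ->].
have hsmall : forall e, e \in D -> x e < threshold l beta.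
  move=> e eD; rewrite ltNge; apply/negP=> hL.
  move: eD; rewrite !inE => /and3P[eF eE eX].
  have [u hu] := cards1P eX.
  have e2 := hE e eE.
  have eX' : #|e :\: X| == 1%N.
    have := cardsID X e; rewrite e2 (eqP eX); lia.
  have [v hv] := cards1P eX'.
  have uX : u \in e :&: X by rewrite hu set11.
  have vX : v \in e :\: X by rewrite hv set11.
  move: uX vX; rewrite !inE => /andP[ue uXX] /andP[vnX ve].
  have uv : u != v by apply/eqP=> Euv; rewrite -Euv uXX in vnX.
  have ee : [set u; v] = e.
    apply/eqP; rewrite eqEcard cards2 uv e2 leqnn andbT.
    by apply/subsetP=> w; rewrite !inE => /orP[]/eqP->.
  move/negP: hint; apply; apply/existsP.
  exists [set w | connect (adj (LARGE E x l beta :\: F)) u w].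
  apply/andP; split; first by apply/imsetP; exists u.
  apply/andP; split; apply/set0Pn.
    by exists u; rewrite !inE connect0 uXX.
  exists v; rewrite !inE vnX andbT; apply: connect1.
  by rewrite /adj ee !inE eF eE hL.
set thr := threshold l beta.
have hthr : 0 < thr <= 1 / 4.
  have hl' : 1 <= l%:R :> R by rewrite ler1n.
  have hp : 4 <= 4 * l%:R * beta :> R by nra.
  rewrite /thr /threshold !mul1r; apply/andP; split.
    by rewrite invr_gt0; lra.
  by rewrite lef_pV2 ?posrE //; lra.
have hxD : 1 <= xsum x D.
  have hsplit : \sum_(e in delta E X) x e = \sum_(e in delta E X :&: F) x e + \sum_(e in delta E X :\: F) x e.
    by rewrite (big_setID F).
  have h1 : xsum x (delta E X :&: F) <= l%:R.
    rewrite /xsum; apply: (@le_trans _ _ (\sum_(e in delta E X :&: F) (1 : R))).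
      apply: ler_sum => e; rewrite !inE => /andP[/andP[eE _] _].
      by case/andP: (hx e eE).
    rewrite sumr_const -hFl ler_nat; apply: subset_leq_card.
    exact: subsetIr.
  rewrite /xsum in hX h1 *; rewrite hsplit in hX; rewrite /D; lra.
set tiny := 1 / (2 * (#|V|%:R) ^+ 2) * thr.
have htiny0 : 0 <= tiny.
  by rewrite /tiny mulr_ge0 // ?divr_ge0 // ?mulr_ge0 // ?exprn_ge0 //; lra.
have hterm : forall e, e \in D -> x e - tiny <= xtilde x l beta e.
  move=> e eD; have hs := hsmall e eD.
  rewrite /xtilde; have -> : (threshold l beta <= x e) = false by rewrite leNgt hs.
  rewrite -/thr -/tiny.
  case: ifP => h; last by lra.
  by have := hx e (hDE e eD); lra.
have hsum : xsum x D - #|D|%:R * tiny <= xsum (xtilde x l beta) D.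
  rewrite /xsum; have -> : \sum_(e in D) x e - #|D|%:R * tiny = \sum_(e in D) (x e - tiny).
    by rewrite sumrB sumr_const mulr_natl.
  exact: ler_sum.
have hcnt : #|D|%:R * tiny <= 1 / 8.
  have hc : (#|D| <= #|V| ^ 2)%N.
    by apply: ncard2 => e eD; apply: hE; apply: hDE.
  case: (posnP #|V|) => hn.
    move: hc; rewrite hn /= leqn0 => /eqP ->; rewrite mul0r; lra.
  have hn' : 0 < (#|V|%:R : R) ^+ 2 by rewrite exprn_gt0 // ltr0n.
  have hc' : (#|D|%:R : R) <= (#|V|%:R) ^+ 2 by rewrite -natrX ler_nat.
  apply: (@le_trans _ _ ((#|V|%:R) ^+ 2 * tiny)).
    by apply: ler_wpM2r.
  have he : (#|V|%:R : R) ^+ 2 * (1 / (2 * (#|V|%:R) ^+ 2)) = 1 / 2.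
    by field; rewrite pnatr_eq0 -lt0n.
  rewrite /tiny mulrA he; lra.
lra.
Qed.
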